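(* There are positive constants $c$ and $b$, not depending on $\varepsilon$, such that for every $t\ge0$, all integers $n>0$, $m\ge0$ and all initial positions $\underline x_0=(x_1,\dots,x_n)$, $\underline y_0=(y_1,\dots,y_{n+m})$ in $\Lambda_\varepsilon$, the coupled process started from $(\underline x_0,\{1,\dots,n\},\underline y_0,\{1,\dots,n+m\},n+m)$ satisfies $$\hat E\big[|D_{\ne}(t)|\big]\le c\,n\,e^{-b\varepsilon^2t},$$ where $D_{\ne}(t)=\{i\in I(t):x_i(t)\ne y_i(t)\}$ and $\hat E$ is expectation for the coupled process.
   Context: Fix $j>0$, $\varepsilon>0$ with $\varepsilon^{-1}\in\mathbb N$, $\Lambda_\varepsilon=\{0,\dots,\varepsilon^{-1}\}$. A labeled configuration is $(\underline x,I)$ with $I\subset\mathbb N$ finite, $x_i\in\Lambda_\varepsilon$. State space $S$: all $(\underline x,I,\underline y,J,N)$ with $I\subset J$, $|J\setminus I|\le m$, $N=\max J$. $I_==\{i\in I:x_i=y_i\}$. The coupled process is the Markov jump process on $S$ with jumps: (1) for each $i\in I\setminus I_=$ and sign $\pm$, at rate $1/2$, $x_i\to x_i\pm1$ (suppressed if outside $\Lambda_\varepsilon$); for each $i\in J\setminus I_=$ and sign, at rate $1/2$, $y_i\to y_i\pm1$ (suppressed if outside); (2) for each $i\in I_=$ and sign, at rate $1/2$, $x_i,y_i$ both move to $x_i\pm1$ (suppressed if outside); (3) at rate $\varepsilon j$: $N\to N+1$, label $N+1$ added to $I$ and $J$ with $x_{N+1}=y_{N+1}=0$; (4) at rate $\varepsilon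 j$: let $i$ be the largest label at the rightmost occupied site of $\underline x$ and $k$ the largest label at the rightmost occupied site of $\underline y$; remove $i$ from $\underline x,I$ and $k$ from $\underline y,J$; if $k\in I$ and $i\ne k$ then: if $x_k\le y_i$ relabel the $\underline y$-particle $i$ as $k$; otherwise relabel the $\underline x$-particle $k$ as $i$; $N$ unchanged. *)

(* Defs.v *)
From Stdlib Require Import Reals List Arith Bool.
From Coquelicot Require Import Coquelicot.
Import ListNotations.
Open Scope R_scope.

(** * Continuous-time Markov jump processes on a countable state space with
    finitely many transitions out of each state: the (minimal) process is
    defined analytically through Feller's backward recursion.
    [trans s] lists the pairs (rate, target state) of the jumps out of [s].
    [mjp_term trans f k t s] = E_s[ f(X_t) ; exactly k jumps in [0,t] ]:
      term 0     : exp(-q(s) t) f(s)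
      term (k+1) : int_0^t exp(-q(s) u) sum_{(r,s')} r * term k (t-u) s' du
    (first jump at time u, to s'), q(s) = total jump rate out of s.
    The expectation E_s[f(X_t)] is the sum over k (an Rbar limit of the
    nondecreasing partial sums when f >= 0). *)

Definition total_rate {S : Type} (trans : S -> list (R * S)) (s : S) : R :=
  fold_right Rplus 0 (map fst (trans s)).

Fixpoint mjp_term {S : Type} (trans : S -> list (R * S)) (f : S -> R)
  (k : nat) (t : R) (s : S) : R :=
  match k with
  | O => exp (- total_rate trans s * t) * f s
  | S k' =>
      RInt (fun u => exp (- total_rate trans s * u) *
              fold_right Rplus 0
                (map (fun p => fst p * mjp_term trans f k' (t - u) (snd p))
                     (trans s))) 0 t
  end.

Definition mjp_expect {S : Type} (trans : S -> list (R * S)) (f : S -> R)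
  (t : R) (s : S) : Rbar :=
  Lim_seq (fun K => sum_n (fun k => mjp_term trans f k t s) K).

(** Labels are positive naturals.  A state (x, I, y, J, N) is encoded by
    [sx i = Some x_i] iff i \in I, [sy i = Some y_i] iff i \in J, and the
    label counter [sN] (all labels ever used are in 1..sN).
    Lambda_eps = {0,...,L} with L = eps^{-1}. *)

Record cstate := mkC { sx : nat -> option nat; sy : nat -> option nat; sN : nat }.

Definition upd (f : nat -> option nat) (i : nat) (v : option nat) :=
  fun k => if Nat.eqb k i then v else f k.

(* largest label at the rightmost occupied site, among labels 1..N *)
Definition rightmost (f : nat -> option nat) (N : nat) : option nat :=
  fold_left (fun acc i =>
     match f i with
     | None => acc
     | Some p => match acc with
                 | None => Some i
                 | Some i' => match f i' with
                              | Some p' => if Nat.leb p' p then Some i else acc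
                              | None => Some i
                              end
                 end
     end) (seq 1 N) None.

(* moves of a single position a in {0..L}: target positions, each at rate 1/2,
   moves leaving Lambda_eps are suppressed (no jump) *)
Definition moves (L a : nat) : list nat :=
  (if Nat.leb (S a) L then [S a] else []) ++
  (match a with O => [] | S a' => [a'] end).

Definition label_trans (L : nat) (s : cstate) (i : nat) : list (R * cstate) :=
  match sx s i, sy s i with
  | Some a, Some b =>
      if Nat.eqb a b then
        map (fun a' => (/2, mkC (upd (sx s) i (Some a')) (upd (sy s) i (Some a')) (sN s)))
            (moves L a)
      else
        map (fun a' => (/2, mkC (upd (sx s) i (Some a')) (sy s) (sN s))) (moves L a) ++
        map (fun b' => (/2, mkC (sx s) (upd (sy s) i (Some b')) (sN s))) (moves L b)
  | None, Some b =>
      map (fun b' => (/2, mkC (sx s) (upd (sy s) i (Some b')) (sN s))) (moves L b)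
  | _, _ => []
  end.

Definition inject (s : cstate) : cstate :=
  mkC (upd (sx s) (S (sN s)) (Some O)) (upd (sy s) (S (sN s)) (Some O)) (S (sN s)).

(* (4) removal; if x is empty only the y-particle is removed, and if y is
   empty there is no jump *)
Definition remove (s : cstate) : option cstate :=
  match rightmost (sy s) (sN s) with
  | None => None
  | Some k =>
    match rightmost (sx s) (sN s) with
    | None => Some (mkC (sx s) (upd (sy s) k None) (sN s))
    | Some i =>
      let x' := upd (sx s) i None in
      let y' := upd (sy s) k None in
      match sx s k, sy s i with
      | Some xk, Some yi =>
          if Nat.eqb i k then Some (mkC x' y' (sN s))
          else if Nat.leb xk yi
               then Some (mkC x' (upd (upd y' i None) k (Some yi)) (sN s))
               else Some (mkC (upd (upd x' k None) i (Some xk)) y' (sN s))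
      | _, _ => Some (mkC x' y' (sN s))
      end
    end
  end.

Definition coupled_trans (L : nat) (j : R) (s : cstate) : list (R * cstate) :=
  let eps := / INR L in
  flat_map (label_trans L s) (seq 1 (sN s)) ++
  [(eps * j, inject s)] ++
  match remove s with Some s' => [(eps * j, s')] | None => [] end.

Definition card_Dneq (s : cstate) : R :=
  INR (length (filter (fun i => match sx s i, sy s i with
                                | Some a, Some b => negb (Nat.eqb a b)
                                | _, _ => false end) (seq 1 (sN s)))).

Definition init_state (n m : nat) (x0 y0 : nat -> nat) : cstate :=
  mkC (fun i => if andb (Nat.leb 1 i) (Nat.leb i n) then Some (x0 i) else None)
      (fun i => if andb (Nat.leb 1 i) (Nat.leb i (n + m)) then Some (y0 i) else None)
      (n + m).

(* Main.v *)
Require Import Defs.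
From Stdlib Require Import Reals List Arith.
From Coquelicot Require Import Coquelicot.
From Stdlib Require Import Lia Lra Psatz.
Import ListNotations.
Open Scope R_scope.

Definition wsum {S : Type} (l : list (R * S)) (h : S -> R) : R :=
  fold_right Rplus 0 (map (fun p => fst p * h (snd p)) l).

Lemma wsum_cont {S : Type} (l : list (R * S)) (g : R -> S -> R) x :
  (forall s, continuous (fun t => g t s) x) ->
  continuous (fun t => wsum l (g t)) x.
Proof.
  intros H. induction l as [|p l IH]; simpl.
  - apply continuous_const.
  - apply (continuous_plus (fun t => fst p * g t (snd p)) (fun t => wsum l (g t))); auto.
    apply (continuous_mult (fun _ => fst p) (fun t => g t (snd p))); auto.
    apply continuous_const.
Qed.

Lemma sum_n_cont (a : nat -> R -> R) K x :
  (forall k, continuous (a k) x) -> continuous (fun t => sum_n (fun k => a k t) K) x.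
Proof.
  intros H. induction K as [|K IH].
  - apply continuous_ext with (f := a 0%nat). intros; rewrite sum_O; reflexivity. apply H.
  - apply continuous_ext with (f := fun t => plus (sum_n (fun k => a k t) K) (a (S K) t)).
    intros; rewrite sum_Sn; reflexivity.
    apply (continuous_plus (fun t => sum_n (fun k => a k t) K) (a (S K))); auto.
Qed.

Lemma cont_ex_RInt (F : R -> R) a b : (forall x, continuous F x) -> ex_RInt F a b.
Proof. intros H; apply (ex_RInt_continuous (V:=R_CompleteNormedModule)); intros; apply H. Qed.

Lemma cont_RInt0 (F : R -> R) x : (forall y, continuous F y) ->
  continuous (fun t => RInt F 0 t) x.
Proof.
  intros H. apply (@ex_derive_continuous R_AbsRing R_NormedModule). exists (F x).
  apply (is_derive_RInt (V:=R_CompleteNormedModule)) with (a := 0).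
  - apply filter_forall. intros b. apply RInt_correct. apply cont_ex_RInt; auto.
  - apply H.
Qed.

Lemma cont_tminus (t : R) y : continuous (fun u : R => t - u) y.
Proof.
  apply (@ex_derive_continuous R_AbsRing R_NormedModule). auto_derive. auto.
Qed.

Lemma cont_comp_tminus (F : R -> R) t y : (forall z, continuous F z) ->
  continuous (fun u => F (t - u)) y.
Proof.
  intros H. apply (continuous_comp (fun u => t - u) F). apply cont_tminus. apply H.
Qed.

Lemma RInt_shift (F : R -> R) t : (forall y, continuous F y) ->
  RInt (fun u => F (t - u)) 0 t = RInt F 0 t.
Proof.
  intros H.
  assert (E := RInt_comp_lin F (-1) t 0 t (cont_ex_RInt F _ _ H)).
  replace (-1 * 0 + t) with t in E by ring.
  replace (-1 * t + t) with 0 in E by ring.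
  assert (E1 : RInt F t 0 = - RInt F 0 t).
  { rewrite <- opp_RInt_swap. reflexivity. apply cont_ex_RInt; auto. }
  assert (E2 : RInt (fun y => scal (-1) (F (-1 * y + t))) 0 t
             = - (RInt (fun u => F (t - u)) 0 t)).
  { rewrite (RInt_ext _ (fun u => opp (F (t - u)))).
    - rewrite (RInt_opp (V:=R_CompleteNormedModule) (fun u => F (t - u))). reflexivity.
      apply cont_ex_RInt. intros y. apply cont_comp_tminus; auto.
    - intros y _. unfold scal; simpl. unfold mult; simpl.
      unfold opp; simpl. replace (-1 * y + t) with (t - y) by ring. ring. }
  pose proof (eq_trans (eq_sym E2) (eq_trans E E1)) as E3. lra.
Qed.

Section Analytic.
Variable St : Type.
Variable trans : St -> list (R * St).
Variable f : St -> R.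

Notation term := (mjp_term trans f).
Notation q := (total_rate trans).

Lemma term_succ k t s :
  term (S k) t s = RInt (fun u => exp (- q s * u) * wsum (trans s) (fun s' => term k (t - u) s')) 0 t.
Proof. reflexivity. Qed.

Lemma cont_exp_lin a y : continuous (fun u => exp (a * u)) y.
Proof. apply (@ex_derive_continuous R_AbsRing R_NormedModule). auto_derive. auto. Qed.

Lemma term_cont : forall k s x, continuous (fun t => term k t s) x.
Proof.
  induction k as [|k IH]; intros s x.
  - simpl. apply (continuous_mult (fun t => exp (- q s * t)) (fun _ => f s)).
    apply cont_exp_lin. apply continuous_const.
  - set (H := fun w => wsum (trans s) (fun s' => term k w s')).
    assert (HC : forall y, continuous H y).
    { intros y. apply (wsum_cont _ (fun w s' => term k w s')). intros; apply IH. }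
    set (F := fun w => exp (q s * w) * H w).
    assert (FC : forall y, continuous F y).
    { intros y. apply (continuous_mult (fun w => exp (q s * w)) H); auto. apply cont_exp_lin. }
    apply continuous_ext with (f := fun t => exp (- q s * t) * RInt F 0 t).
    + intros t. rewrite term_succ. rewrite <- RInt_shift by auto.
      rewrite <- (RInt_scal (V:=R_CompleteNormedModule)).
      * apply RInt_ext. intros u _. unfold F, H, scal; simpl. unfold mult; simpl.
        rewrite <- Rmult_assoc, <- exp_plus.
        f_equal. f_equal. ring.
      * apply cont_ex_RInt. intros y. apply cont_comp_tminus; auto.
    + apply (continuous_mult (fun t => exp (- q s * t)) (fun t => RInt F 0 t)).
      apply cont_exp_lin. apply cont_RInt0; auto.
Qed.

Lemma term_cont_shift k s t y : continuous (fun u => term k (t - u) s) y.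
Proof. apply (continuous_comp (fun u => t - u) (fun w => term k w s)). apply cont_tminus. apply term_cont. Qed.

Lemma wsum_plus {T : Type} (l : list (R * T)) g1 g2 :
  wsum l g1 + wsum l g2 = wsum l (fun s => g1 s + g2 s).
Proof. unfold wsum. induction l; simpl; [ring|]. rewrite <- IHl. ring. Qed.

Lemma P_succ : forall K s t,
  sum_n (fun k => term k t s) (S K) =
  exp (- q s * t) * f s +
  RInt (fun u => exp (- q s * u) * wsum (trans s) (fun s' => sum_n (fun k => term k (t - u) s') K)) 0 t.
Proof.
  induction K as [|K IH]; intros s t.
  - rewrite sum_Sn, sum_O. change (plus (term 0 t s) (term 1 t s)) with (term 0 t s + term 1 t s).
    simpl (term 0 t s). rewrite term_succ. f_equal.
    apply RInt_ext. intros u _. f_equal. unfold wsum. f_equal. apply map_ext. intros p.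
    rewrite sum_O. reflexivity.
  - rewrite sum_Sn, IH. change (plus ?a ?b) with (a + b). rewrite term_succ.
    rewrite Rplus_assoc. f_equal.
    rewrite <- (RInt_plus (V:=R_CompleteNormedModule)).
    + apply RInt_ext. intros u _. unfold plus; simpl. rewrite <- Rmult_plus_distr_l. f_equal.
      rewrite wsum_plus. unfold wsum. f_equal. apply map_ext. intros p. rewrite sum_Sn. reflexivity.
    + apply cont_ex_RInt. intros y.
      apply (continuous_mult (fun u => exp (- q s * u))). apply cont_exp_lin.
      apply (wsum_cont _ (fun u s' => sum_n (fun k => term k (t - u) s') K)). intros s'.
      apply (sum_n_cont (fun k u => term k (t - u) s')). intros; apply term_cont_shift.
    + apply cont_ex_RInt. intros y.
      apply (continuous_mult (fun u => exp (- q s * u))). apply cont_exp_lin.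
      apply (wsum_cont _ (fun u s' => term (S K) (t - u) s')). intros s'. apply term_cont_shift.
Qed.
End Analytic.

Lemma wsum_le {T : Type} (l : list (R * T)) g1 g2 :
  (forall p, In p l -> 0 <= fst p /\ g1 (snd p) <= g2 (snd p)) -> wsum l g1 <= wsum l g2.
Proof.
  unfold wsum. induction l as [|p l IH]; simpl; intros H; [lra|].
  destruct (H p (or_introl eq_refl)) as [H1 H2].
  assert (fst p * g1 (snd p) <= fst p * g2 (snd p)) by (apply Rmult_le_compat_l; auto).
  assert (fold_right Rplus 0 (map (fun p0 => fst p0 * g1 (snd p0)) l) <=
          fold_right Rplus 0 (map (fun p0 => fst p0 * g2 (snd p0)) l)) by (apply IH; auto).
  lra.
Qed.

Lemma wsum_scal {T : Type} (l : list (R * T)) c g :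
  wsum l (fun s => c * g s) = c * wsum l g.
Proof. unfold wsum. induction l; simpl; [ring|]. rewrite IHl. ring. Qed.

Lemma exp_integral a t :
  a * RInt (fun u => exp (- a * u)) 0 t = 1 - exp (- a * t).
Proof.
  rewrite <- (RInt_scal (V:=R_CompleteNormedModule)).
  2:{ apply cont_ex_RInt. intros; apply cont_exp_lin. }
  apply is_RInt_unique.
  replace (1 - exp (- a * t)) with (minus ((fun u => - exp (- a * u)) t) ((fun u => - exp (- a * u)) 0)).
  2:{ unfold minus, plus, opp; simpl. replace (- a * 0) with 0 by ring. rewrite exp_0. ring. }
  apply (is_RInt_derive (V:=R_CompleteNormedModule) (fun u => - exp (- a * u))).
  - intros x _. auto_derive. auto. unfold scal; simpl; unfold mult; simpl. ring.
  - intros x _. apply (continuous_mult (fun _ => a) (fun u => exp (- a * u))).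
    apply continuous_const. apply cont_exp_lin.
Qed.

Section Dynkin.
Variable St : Type.
Variable trans : St -> list (R * St).
Variable f V : St -> R.
Variable Inv : St -> Prop.
Variable lam : R.
Hypothesis Hrate : forall s, Inv s -> forall p, In p (trans s) -> 0 <= fst p /\ Inv (snd p).
Hypothesis Hf : forall s, Inv s -> f s <= V s.
Hypothesis HV : forall s, Inv s -> 0 <= V s.
Hypothesis Hdrift : forall s, Inv s -> wsum (trans s) V <= (total_rate trans s - lam) * V s.

Notation term := (mjp_term trans f).
Notation q := (total_rate trans).

Lemma dynkin_partial : forall K s t, Inv s -> 0 <= t ->
  sum_n (fun k => term k t s) K <= exp (- lam * t) * V s.
Proof.
  induction K as [|K IH]; intros s t Hs Ht.
  - rewrite sum_O. simpl.
    destruct (Req_dec (V s) 0) as [E|E].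
    + rewrite E. assert (f s <= 0) by (rewrite <- E; auto).
      assert (0 < exp (- q s * t)) by apply exp_pos. nra.
    + assert (HW : 0 <= wsum (trans s) V).
      { replace 0 with (wsum (trans s) (fun _ => 0)).
        apply wsum_le. intros p Hp. destruct (Hrate s Hs p Hp). split; auto.
        unfold wsum. induction (trans s); simpl; auto. rewrite IHl. ring. }
      assert (0 < V s) by (destruct (HV s Hs); auto; congruence).
      assert (Hq : lam <= q s).
      { specialize (Hdrift s Hs). destruct (Rle_lt_dec lam (q s)); auto. nra. }
      assert (exp (- q s * t) <= exp (- lam * t)).
      { destruct (Req_dec (- q s * t) (- lam * t)) as [E'|E']. rewrite E'; lra.
        left. apply exp_increasing. nra. }
      assert (0 < exp (- q s * t)) by apply exp_pos.
      specialize (Hf s Hs). nra.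
  - rewrite P_succ.
    set (a := q s - lam).
    set (I := RInt (fun u => exp (- a * u)) 0 t).
    assert (HI : a * I = 1 - exp (- a * t)) by apply exp_integral.
    assert (HI0 : 0 <= I).
    { apply RInt_ge_0; auto. apply cont_ex_RInt. intros; apply cont_exp_lin.
      intros; left; apply exp_pos. }
    assert (Hle : RInt (fun u => exp (- q s * u) * wsum (trans s) (fun s' => sum_n (fun k => term k (t - u) s') K)) 0 t
                 <= exp (- lam * t) * wsum (trans s) V * I).
    { unfold I. rewrite <- (RInt_scal (V:=R_CompleteNormedModule)).
      2:{ apply cont_ex_RInt. intros; apply cont_exp_lin. }
      apply RInt_le; auto.
      - apply cont_ex_RInt. intros y.
        apply (continuous_mult (fun u => exp (- q s * u))). apply cont_exp_lin.
        apply (wsum_cont _ (fun u s' => sum_n (fun k => term k (t - u) s') K)). intros s'.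
        apply (sum_n_cont (fun k u => term k (t - u) s')). intros; apply term_cont_shift.
      - apply cont_ex_RInt. intros y. unfold scal; simpl; unfold mult; simpl.
        apply (continuous_mult (fun _ => exp (- lam * t) * wsum (trans s) V)).
        apply continuous_const. apply cont_exp_lin.
      - intros u Hu. unfold scal; simpl; unfold mult; simpl.
        apply Rle_trans with (exp (- q s * u) * wsum (trans s) (fun s' => exp (- lam * (t - u)) * V s')).
        + apply Rmult_le_compat_l. left; apply exp_pos.
          apply wsum_le. intros p Hp. destruct (Hrate s Hs p Hp) as [H1 H2]. split; auto.
          apply IH; auto. lra.
        + rewrite wsum_scal. rewrite <- !Rmult_assoc. apply Req_le.
          assert (EE : exp (- q s * u) * exp (- lam * (t - u)) = exp (- lam * t) * exp (- a * u)) by (rewrite <- !exp_plus; f_equal; unfold a; ring).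
          rewrite EE. ring. }
    specialize (Hdrift s Hs). specialize (Hf s Hs).
    assert (Ea : exp (- q s * t) = exp (- lam * t) * exp (- a * t)).
    { rewrite <- exp_plus. f_equal. unfold a. ring. }
    assert (0 < exp (- lam * t)) by apply exp_pos.
    assert (0 < exp (- a * t)) by apply exp_pos.
    fold a in Hdrift.
    assert (wsum (trans s) V * I <= a * V s * I) by (apply Rmult_le_compat_r; auto).
    rewrite Ea.
    assert (exp (- lam * t) * exp (- a * t) * f s <= exp (- lam * t) * exp (- a * t) * V s).
    { apply Rmult_le_compat_l; auto. left; apply Rmult_lt_0_compat; auto. }
    assert (exp (- lam * t) * (wsum (trans s) V * I) <= exp (- lam * t) * (a * V s * I)).
    { apply Rmult_le_compat_l; lra. }
    replace (a * V s * I) with (V s * (a * I)) in H3 by ring.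
    rewrite HI in H3. nra.
Qed.

Lemma dynkin s t : Inv s -> 0 <= t ->
  Rbar_le (mjp_expect trans f t s) (Finite (exp (- lam * t) * V s)).
Proof.
  intros Hs Ht. unfold mjp_expect.
  rewrite <- (Lim_seq_const (exp (- lam * t) * V s)).
  apply Lim_seq_le_loc. exists 0%nat. intros K _. apply dynkin_partial; auto.
Qed.
End Dynkin.

Section Comb.
Variable L : nat.
Hypothesis HL : (0 < L)%nat.

Definition M : R := INR L + 1.
Definition lam : R := / (M * M).

Definition G (d : nat) : R :=
  match d with O => 0 | S e => 1 + INR e * (2 * M - INR (S e)) / (M * M) end.

Lemma M_pos : 1 < M.
Proof. unfold M. apply lt_0_INR in HL. lra. Qed.

Lemma G_le2 d : G d <= 2.
Proof.
  destruct d as [|e]; unfold G; [lra|]. pose proof M_pos. rewrite S_INR.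
  assert (INR e * (2 * M - (INR e + 1)) <= M * M) by (pose proof (pos_INR e); pose proof (Rle_0_sqr (M - INR e)); unfold Rsqr in *; nra).
  assert (INR e * (2 * M - (INR e + 1)) / (M * M) <= 1).
  { apply Rmult_le_reg_r with (M * M). nra. unfold Rdiv. rewrite Rmult_assoc, Rinv_l by nra. lra. }
  lra.
Qed.

Lemma G_ge1 e : (e + 1 <= L)%nat -> 1 <= G (S e).
Proof.
  intros H. unfold G. pose proof M_pos. rewrite S_INR.
  assert (INR e + 1 <= INR L) by (rewrite <- S_INR; apply le_INR; lia).
  assert (0 <= INR e) by apply pos_INR.
  assert (0 <= INR e * (2 * M - (INR e + 1)) / (M * M)).
  { apply Rmult_le_pos. apply Rmult_le_pos; unfold M in *; lra. left; apply Rinv_0_lt_compat; nra. }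
  lra.
Qed.

Lemma G_ge0 d : (d <= L)%nat -> 0 <= G d.
Proof. destruct d; simpl; intros. lra. pose proof (G_ge1 d ltac:(lia)). simpl in H0. lra. Qed.

Lemma G_mono1 d : (d <= L)%nat -> G d <= G (S d).
Proof.
  intros H. destruct d as [|e].
  - simpl. lra.
  - pose proof M_pos. unfold G. rewrite !S_INR.
    assert (INR e + 1 <= INR L) by (rewrite <- S_INR; apply le_INR; lia).
    assert (INR e * (2 * M - (INR e + 1)) <= (INR e + 1) * (2 * M - (INR e + 1 + 1))) by (unfold M in *; nra).
    unfold Rdiv. apply Rplus_le_compat_l. apply Rmult_le_compat_r; auto.
    left; apply Rinv_0_lt_compat; nra.
Qed.

Lemma G_mono d1 d2 : (d1 <= d2)%nat -> (d2 <= L)%nat -> G d1 <= G d2.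
Proof.
  intros H1 H2. induction H1. lra.
  apply Rle_trans with (G m). apply IHle; lia. apply G_mono1; lia.
Qed.

Lemma G_drift e : (e + 1 <= L)%nat -> G (S (S e)) + G e - 2 * G (S e) <= - lam * G (S e).
Proof.
  intros H. pose proof M_pos. unfold lam.
  assert (HM : 0 < M * M) by nra.
  destruct e as [|e].
  - assert (E1 : G 2 + G 0 - 2 * G 1 = (2 * M - 2) / (M * M) - 1).
    { unfold G. simpl. field. lra. }
    assert (E2 : G 1 = 1) by (unfold G; simpl; unfold Rdiv; ring).
    rewrite E1, E2.
    assert ((2 * M - 1) / (M * M) <= 1).
    { apply Rmult_le_reg_r with (M * M); auto. unfold Rdiv. rewrite Rmult_assoc, Rinv_l by lra.
      pose proof (Rle_0_sqr (M - 1)). unfold Rsqr in *. nra. }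
    assert (/ (M * M) <= 1) by (rewrite <- Rinv_1; apply Rinv_le_contravar; nra).
    unfold Rdiv in *. nra.
  - assert (E1 : G (S (S (S e))) + G (S e) - 2 * G (S (S e)) = - 2 * / (M * M)).
    { unfold G. rewrite !S_INR. field. lra. }
    rewrite E1. pose proof (G_le2 (S (S e))).
    assert (0 < / (M * M)) by (apply Rinv_0_lt_compat; auto).
    nra.
Qed.
End Comb.

Definition rstep (f : nat -> option nat) := (fun acc i =>
     match f i with
     | None => acc
     | Some p => match acc with
                 | None => Some i
                 | Some i' => match f i' with
                              | Some p' => if Nat.leb p' p then Some i else acc
                              | None => Some i
                              end
                 end
     end).

Definition rgood (f : nat -> option nat) (P : nat -> Prop) (acc : option nat) : Prop :=
  match acc with
  | None => forall j, P j -> f j = None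
  | Some i => P i /\ exists p, f i = Some p /\ forall j p', P j -> f j = Some p' -> (p' <= p)%nat
  end.

Lemma rgood_iff f P Q acc : (forall j, P j <-> Q j) -> rgood f P acc -> rgood f Q acc.
Proof.
  intros H. destruct acc as [i|]; simpl.
  - intros [H1 [p [H2 H3]]]. split. apply H; auto. exists p. split; auto.
    intros j p' Hj. apply H3. apply H; auto.
  - intros H1 j Hj. apply H1, H; auto.
Qed.

Lemma rgood_fold f : forall l acc P, rgood f P acc ->
  rgood f (fun j => P j \/ In j l) (fold_left (rstep f) l acc).
Proof.
  induction l as [|a l IH]; intros acc P H; simpl.
  - eapply rgood_iff; [|exact H]. intros j; simpl; tauto.
  - eapply rgood_iff; [|apply (IH _ (fun j => P j \/ j = a))].
    + intros j. simpl. split; intros HH; repeat destruct HH as [HH|HH]; subst; auto.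
    + unfold rstep. destruct (f a) as [p|] eqn:Ea.
      * destruct acc as [i'|]; simpl in H.
        -- destruct H as [HP [p0 [Hi' Hmax]]]. rewrite Hi'.
           destruct (Nat.leb p0 p) eqn:Eb.
           ++ apply Nat.leb_le in Eb. simpl. split; auto. exists p. split; auto.
              intros j p' [Hj|Hj] Hf. specialize (Hmax j p' Hj Hf). lia. subst j. rewrite Ea in Hf. inversion Hf. lia.
           ++ apply Nat.leb_gt in Eb. simpl. split; auto. exists p0. split; auto.
              intros j p' [Hj|Hj] Hf. apply (Hmax j p' Hj Hf). subst j. rewrite Ea in Hf. inversion Hf. lia.
        -- simpl. split; auto. exists p. split; auto.
           intros j p' [Hj|Hj] Hf. rewrite H in Hf; auto; discriminate. subst j. rewrite Ea in Hf. inversion Hf. lia.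
      * destruct acc as [i'|]; simpl in *.
        -- destruct H as [HP [p0 [Hi' Hmax]]]. split; auto. exists p0. split; auto.
           intros j p' [Hj|Hj] Hf. apply (Hmax j p' Hj Hf). subst j; congruence.
        -- intros j [Hj|Hj]; auto. subst j; auto.
Qed.

Lemma rightmost_spec f N i : rightmost f N = Some i ->
  (1 <= i <= N)%nat /\ exists p, f i = Some p /\
   forall j p', (1 <= j <= N)%nat -> f j = Some p' -> (p' <= p)%nat.
Proof.
  intros H. change (rightmost f N) with (fold_left (rstep f) (seq 1 N) None) in H.
  assert (G := rgood_fold f (seq 1 N) None (fun _ => False) ltac:(simpl; tauto)).
  rewrite H in G. simpl in G. destruct G as [[[]|Hi] [p [Hp Hmax]]].
  apply in_seq in Hi. split. lia. exists p. split; auto.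
  intros j p' Hj Hf. apply (Hmax j p'); auto. right. apply in_seq. lia.
Qed.

Definition sumL (l : list nat) (c : nat -> R) : R := fold_right Rplus 0 (map c l).

Lemma sumL_le l c1 c2 : (forall i, In i l -> c1 i <= c2 i) -> sumL l c1 <= sumL l c2.
Proof.
  unfold sumL. induction l as [|a l IH]; simpl; intros H. lra.
  apply Rplus_le_compat; auto.
Qed.

Lemma sumL_ext l c1 c2 : (forall i, In i l -> c1 i = c2 i) -> sumL l c1 = sumL l c2.
Proof.
  unfold sumL. induction l as [|a l IH]; simpl; intros H. lra.
  rewrite H, IH; auto.
Qed.

Lemma sumL_diff l c c' i : NoDup l -> In i l -> (forall k, k <> i -> c' k = c k) ->
  sumL l c' - sumL l c = c' i - c i.
Proof.
  unfold sumL. induction l as [|a l IH]; simpl; intros ND Hi H. contradiction.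
  inversion ND; subst. destruct Hi as [Hi|Hi].
  - subst a. assert (fold_right Rplus 0 (map c' l) = fold_right Rplus 0 (map c l)).
    { f_equal. apply map_ext_in. intros k Hk. apply H. intro; subst; auto. }
    lra.
  - rewrite (H a) by (intro; subst; auto). specialize (IH H3 Hi H). lra.
Qed.

Lemma sumL_app l1 l2 c : sumL (l1 ++ l2) c = sumL l1 c + sumL l2 c.
Proof. unfold sumL. rewrite map_app. induction l1; simpl; lra. Qed.

Lemma sumL_const l k : sumL l (fun _ => k) = INR (length l) * k.
Proof. unfold sumL. induction l; simpl length; [simpl; lra|]. rewrite S_INR. simpl. rewrite IHl. ring. Qed.

Definition dist (a b : nat) : nat := (a - b + (b - a))%nat.

Section States.
Variable L : nat.
Hypothesis HL : (0 < L)%nat.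

Definition contrib (s : cstate) (i : nat) : R :=
  match sx s i, sy s i with Some a, Some b => G L (dist a b) | _, _ => 0 end.

Definition Vf (s : cstate) : R := sumL (seq 1 (sN s)) (contrib s).

Definition goodf (g : nat -> option nat) := forall i a, g i = Some a -> (a <= L)%nat.
Definition Inv (s : cstate) := goodf (sx s) /\ goodf (sy s).

Lemma contrib_nonneg s i : Inv s -> 0 <= contrib s i.
Proof.
  intros [Hx Hy]. unfold contrib. destruct (sx s i) eqn:E1; [|lra]. destruct (sy s i) eqn:E2; [|lra].
  apply G_ge0; auto. apply Hx in E1. apply Hy in E2. unfold dist. lia.
Qed.

Lemma V_nonneg s : Inv s -> 0 <= Vf s.
Proof.
  intros H. unfold Vf. replace 0 with (sumL (seq 1 (sN s)) (fun _ => 0)).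
  apply sumL_le. intros; apply contrib_nonneg; auto.
  rewrite sumL_const. ring.
Qed.

Lemma card_le s : Inv s -> card_Dneq s <= Vf s.
Proof.
  intros H. unfold card_Dneq, Vf.
  assert (E : forall l (p : nat -> bool), INR (length (filter p l)) = sumL l (fun i => if p i then 1 else 0)).
  { unfold sumL. induction l as [|a l IH]; intros p; simpl. reflexivity. destruct (p a); simpl length; rewrite ?S_INR, IH; simpl; ring. }
  rewrite E. apply sumL_le. intros i _. unfold contrib.
  destruct H as [Hx Hy].
  destruct (sx s i) as [a|] eqn:E1; [|lra]. destruct (sy s i) as [b|] eqn:E2; [|lra].
  destruct (Nat.eqb a b) eqn:E3; simpl.
  - apply G_ge0; auto. apply Hx in E1. apply Hy in E2. unfold dist. lia.
  - apply Nat.eqb_neq in E3. apply Hx in E1. apply Hy in E2.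
    destruct (dist a b) as [|e] eqn:Ed. unfold dist in Ed; lia.
    apply G_ge1; auto. unfold dist in Ed; lia.
Qed.


Lemma goodf_upd g i v : goodf g -> (forall a, v = Some a -> (a <= L)%nat) -> goodf (upd g i v).
Proof. intros H1 H2 k a. unfold upd. destruct (Nat.eqb k i); auto. apply H1. Qed.

Lemma dist_le a b : (a <= L)%nat -> (b <= L)%nat -> (dist a b <= L)%nat.
Proof. unfold dist; lia. Qed.

Ltac fin s :=   repeat match goal with |- context [match ?o with Some _ => 0 | None => 0 end] =>
    replace (match o with Some _ => 0 | None => 0 end) with 0 by (destruct o; reflexivity) end;
  first [ apply Rle_refl
  | match goal with |- 0 <= match sx s ?l with _ => _ end => change (0 <= contrib s l) end;
    apply contrib_nonneg; split; assumption
  | lra ].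

Lemma remove_le s s' : Inv s -> Defs.remove s = Some s' ->
  sN s' = sN s /\ (forall l, contrib s' l <= contrib s l) /\ Inv s'.
Proof.
  intros [Hx Hy] H. unfold Defs.remove in H.
  destruct (rightmost (sy s) (sN s)) as [k|] eqn:Ek; [|discriminate].
  apply rightmost_spec in Ek. destruct Ek as [Hk [yk [Eyk Hmy]]].
  destruct (rightmost (sx s) (sN s)) as [i|] eqn:Ei.
  - apply rightmost_spec in Ei. destruct Ei as [Hi [xi [Exi Hmx]]].
    destruct (sx s k) as [xk|] eqn:Exk; destruct (sy s i) as [yi|] eqn:Eyi.
    + destruct (Nat.eqb i k) eqn:Eik.
      * apply Nat.eqb_eq in Eik. subst k.
        inversion H; subst s'; clear H. simpl. split; auto. split.
        -- intros l. unfold contrib; simpl. unfold upd.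
           destruct (Nat.eqb_spec l i); try fin s.
        -- split; apply goodf_upd; auto; discriminate.
      * apply Nat.eqb_neq in Eik.
        destruct (Nat.leb xk yi) eqn:Ele.
        -- apply Nat.leb_le in Ele. inversion H; subst s'; clear H. simpl. split; auto. split.
           ++ intros l. unfold contrib; simpl. unfold upd.
              destruct (Nat.eqb_spec l k); destruct (Nat.eqb_spec l i); try (exfalso; congruence); try fin s.
              subst l. rewrite Exk, Eyk. apply (G_mono L HL).
              assert (yi <= yk)%nat by (apply (Hmy i yi); auto). unfold dist; lia.
              apply dist_le; eauto.
           ++ split; repeat apply goodf_upd; auto; try discriminate.
              intros a Ha; inversion Ha; subst; eauto.
        -- apply Nat.leb_gt in Ele. inversion H; subst s'; clear H. simpl. split; auto. split.
           ++ intros l. unfold contrib; simpl. unfold upd.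
              destruct (Nat.eqb_spec l k); destruct (Nat.eqb_spec l i); try (exfalso; congruence); try fin s.
              subst l. rewrite Exi, Eyi. apply (G_mono L HL).
              assert (xk <= xi)%nat by (apply (Hmx k xk); auto). unfold dist; lia.
              apply dist_le; eauto.
           ++ split; repeat apply goodf_upd; auto; try discriminate.
              intros a Ha; inversion Ha; subst; eauto.
    + inversion H; subst s'; clear H. simpl. split; auto. split.
      * intros l. unfold contrib; simpl. unfold upd.
        destruct (Nat.eqb_spec l i); destruct (Nat.eqb_spec l k); try fin s.
      * split; apply goodf_upd; auto; discriminate.
    + inversion H; subst s'; clear H. simpl. split; auto. split.
      * intros l. unfold contrib; simpl. unfold upd.
        destruct (Nat.eqb_spec l i); destruct (Nat.eqb_spec l k); try fin s.
      * split; apply goodf_upd; auto; discriminate.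
    + inversion H; subst s'; clear H. simpl. split; auto. split.
      * intros l. unfold contrib; simpl. unfold upd.
        destruct (Nat.eqb_spec l i); destruct (Nat.eqb_spec l k); try fin s.
      * split; apply goodf_upd; auto; discriminate.
  - inversion H; subst s'; clear H. simpl. split; auto. split.
    + intros l. unfold contrib; simpl. unfold upd.
      destruct (Nat.eqb_spec l k); try fin s.
    + split; try apply goodf_upd; auto; discriminate.
Qed.


Lemma dist_comm a b : dist a b = dist b a.
Proof. unfold dist; lia. Qed.

Lemma core a b : (b < a <= L)%nat ->
  sumL (moves L a) (fun a' => / 2 * (G L (dist a' b) - G L (dist a b))) +
  sumL (moves L b) (fun b' => / 2 * (G L (dist b' a) - G L (dist a b))) <= - lam L * G L (dist a b).
Proof.
  intros Hab. destruct a as [|a0]; [lia|].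
  assert (Hd : dist (S a0) b = S (a0 - b)) by (unfold dist; lia).
  assert (Dr := G_drift L HL (a0 - b) ltac:(lia)).
  assert (Mo := G_mono1 L HL (S (a0 - b)) ltac:(lia)).
  rewrite Hd.
  assert (Mb : moves L b = [S b] ++ match b with O => [] | S b0 => [b0] end).
  { unfold moves. replace (Nat.leb (S b) L) with true. reflexivity. symmetry; apply Nat.leb_le; lia. }
  assert (Ma : moves L (S a0) = (if Nat.leb (S (S a0)) L then [S (S a0)] else []) ++ [a0]) by reflexivity.
  rewrite Ma, Mb. rewrite !sumL_app.
  assert (E1 : dist (S (S a0)) b = S (S (a0 - b))) by (unfold dist; lia).
  assert (E2 : dist a0 b = (a0 - b)%nat) by (unfold dist; lia).
  assert (E3 : dist (S b) (S a0) = (a0 - b)%nat) by (unfold dist; lia).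
  assert (X : sumL (match b with O => [] | S b0 => [b0] end)
                (fun b' => / 2 * (G L (dist b' (S a0)) - G L (S (a0 - b)))) <=
              / 2 * (G L (S (S (a0 - b))) - G L (S (a0 - b)))).
  { destruct b as [|b0]; unfold sumL; cbn [map fold_right].
    - lra.
    - replace (dist b0 (S a0)) with (S (S (a0 - S b0))) by (unfold dist; lia). lra. }
  assert (Y : sumL (if Nat.leb (S (S a0)) L then [S (S a0)] else [])
                (fun a' => / 2 * (G L (dist a' b) - G L (S (a0 - b)))) <=
              / 2 * (G L (S (S (a0 - b))) - G L (S (a0 - b)))).
  { destruct (Nat.leb (S (S a0)) L); unfold sumL; cbn [map fold_right]. rewrite E1. lra. lra. }
  unfold sumL in *; cbn [map fold_right app] in *. rewrite E2, E3. lra.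
Qed.


Lemma wsum_app {T : Type} (l1 l2 : list (R * T)) h : wsum (l1 ++ l2) h = wsum l1 h + wsum l2 h.
Proof. unfold wsum. rewrite map_app. induction l1; simpl; lra. Qed.

Lemma wsum_ext {T : Type} (l : list (R * T)) h1 h2 :
  (forall p, In p l -> h1 (snd p) = h2 (snd p)) -> wsum l h1 = wsum l h2.
Proof. unfold wsum. intros H. f_equal. apply map_ext_in. intros p Hp. rewrite H; auto. Qed.

Lemma wsum_mapm {T : Type} (ms : list nat) (st : nat -> T) h :
  wsum (map (fun a' => (/ 2, st a')) ms) h = sumL ms (fun a' => / 2 * h (st a')).
Proof. unfold wsum, sumL. rewrite map_map. reflexivity. Qed.

Lemma wsum_sub {T : Type} (l : list (R * T)) h c :
  wsum l (fun x => h x - c) = wsum l h - c * fold_right Rplus 0 (map fst l).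
Proof. unfold wsum. induction l; simpl; [ring|]. rewrite IHl. ring. Qed.

Lemma wsum_flat_map {T : Type} (g : nat -> list (R * T)) l h :
  wsum (flat_map g l) h = sumL l (fun i => wsum (g i) h).
Proof. induction l; simpl. reflexivity. rewrite wsum_app, IHl. reflexivity. Qed.

Lemma label_local s i p : In p (label_trans L s i) ->
  sN (snd p) = sN s /\ forall l, l <> i -> sx (snd p) l = sx s l /\ sy (snd p) l = sy s l.
Proof.
  unfold label_trans. intros H.
  destruct (sx s i) as [a|]; destruct (sy s i) as [b|]; try contradiction.
  - destruct (Nat.eqb a b).
    + apply in_map_iff in H. destruct H as [a' [<- _]]. simpl. split; auto.
      intros l Hl. unfold upd. apply Nat.eqb_neq in Hl. rewrite Hl. auto.
    + apply in_app_or in H. destruct H as [H|H]; apply in_map_iff in H; destruct H as [a' [<- _]];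
      simpl; split; auto; intros l Hl; unfold upd; apply Nat.eqb_neq in Hl; rewrite Hl; auto.
  - apply in_map_iff in H. destruct H as [a' [<- _]]. simpl. split; auto.
    intros l Hl. unfold upd. apply Nat.eqb_neq in Hl. rewrite Hl. auto.
Qed.

Lemma upd_same (g : nat -> option nat) i v : upd g i v i = v.
Proof. unfold upd. rewrite Nat.eqb_refl. reflexivity. Qed.

Lemma dist_self a : dist a a = 0%nat.
Proof. unfold dist; lia. Qed.

Lemma label_drift s i : Inv s -> In i (seq 1 (sN s)) ->
  wsum (label_trans L s i) (fun s' => Vf s' - Vf s) <= - lam L * contrib s i.
Proof.
  intros [Hx Hy] Hi.
  rewrite (wsum_ext _ _ (fun s' => contrib s' i - contrib s i)).
  2:{ intros p Hp. destruct (label_local s i p Hp) as [HN Hl]. unfold Vf. rewrite HN.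
      apply sumL_diff; auto. apply seq_NoDup. intros k Hk. unfold contrib.
      destruct (Hl k Hk) as [-> ->]. reflexivity. }
  unfold label_trans.
  destruct (sx s i) as [a|] eqn:Ea; destruct (sy s i) as [b|] eqn:Eb.
  - assert (Ci : contrib s i = G L (dist a b)) by (unfold contrib; rewrite Ea; try rewrite Eb; reflexivity).
    rewrite Ci.
    destruct (Nat.eqb_spec a b).
    + subst b. rewrite wsum_mapm. rewrite dist_self.
      rewrite (sumL_ext _ _ (fun _ => 0)). rewrite sumL_const. replace (G L 0) with 0 by reflexivity. lra.
      intros k _. unfold contrib; cbn [sx sy]. rewrite !upd_same, !dist_self. simpl. ring.
    + rewrite wsum_app, !wsum_mapm.
      rewrite (sumL_ext (moves L a) _ (fun a' => / 2 * (G L (dist a' b) - G L (dist a b)))).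
      2:{ intros k _. unfold contrib; cbn [sx sy]. rewrite upd_same, Eb. reflexivity. }
      rewrite (sumL_ext (moves L b) _ (fun b' => / 2 * (G L (dist a b') - G L (dist a b)))).
      2:{ intros k _. unfold contrib; cbn [sx sy]. rewrite upd_same, Ea. reflexivity. }
      apply Hx in Ea. apply Hy in Eb.
      destruct (Nat.lt_ge_cases b a).
      * pose proof (core a b ltac:(lia)).
        rewrite (sumL_ext (moves L b) _ (fun b' => / 2 * (G L (dist b' a) - G L (dist a b)))). lra.
        intros k _. rewrite dist_comm. reflexivity.
      * pose proof (core b a ltac:(lia)).
        rewrite (dist_comm b a) in H0.
        rewrite (sumL_ext (moves L b) _ (fun b' => / 2 * (G L (dist b' a) - G L (dist a b)))).
        lra. intros k _. rewrite (dist_comm k a). reflexivity.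
  - assert (Ci : contrib s i = 0) by (unfold contrib; rewrite Ea; try rewrite Eb; reflexivity).
    rewrite Ci. unfold wsum. simpl. lra.
  - assert (Ci : contrib s i = 0) by (unfold contrib; rewrite Ea; try rewrite Eb; reflexivity).
    rewrite Ci. rewrite wsum_mapm.
    rewrite (sumL_ext _ _ (fun _ => 0)). rewrite sumL_const. lra.
    intros k _. unfold contrib; cbn [sx sy]. rewrite Ea. ring.
  - assert (Ci : contrib s i = 0) by (unfold contrib; rewrite Ea; try rewrite Eb; reflexivity).
    rewrite Ci. unfold wsum. simpl. lra.
Qed.


Lemma sumL_scal l c g : sumL l (fun i => c * g i) = c * sumL l g.
Proof. unfold sumL. induction l; simpl; [ring|]. rewrite IHl. ring. Qed.

Lemma V_inject s : Vf (inject s) = Vf s.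
Proof.
  unfold Vf, inject. cbn [sN]. rewrite seq_S, sumL_app.
  replace (sumL [1 + sN s]%nat (contrib {| sx := upd (sx s) (S (sN s)) (Some 0%nat);
     sy := upd (sy s) (S (sN s)) (Some 0%nat); sN := S (sN s) |})) with 0.
  2:{ unfold sumL, contrib. cbn [map fold_right sx sy]. replace (1 + sN s)%nat with (S (sN s)) by lia.
      rewrite !upd_same. simpl. ring. }
  rewrite Rplus_0_r. apply sumL_ext. intros k Hk. apply in_seq in Hk.
  unfold contrib. cbn [sx sy]. unfold upd. replace (Nat.eqb k (S (sN s))) with false. reflexivity.
  symmetry. apply Nat.eqb_neq. lia.
Qed.

Variable j : R.
Hypothesis Hj : 0 < j.

Lemma eps_j_pos : 0 <= / INR L * j.
Proof. apply Rmult_le_pos; [|lra]. left. apply Rinv_0_lt_compat. apply lt_0_INR. lia. Qed.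

Lemma drift s : Inv s ->
  wsum (coupled_trans L j s) Vf <= (total_rate (coupled_trans L j) s - lam L) * Vf s.
Proof.
  intros HI.
  assert (D : wsum (coupled_trans L j s) (fun s' => Vf s' - Vf s) <= - lam L * Vf s).
  { unfold coupled_trans. rewrite !wsum_app, wsum_flat_map.
    assert (D1 : sumL (seq 1 (sN s)) (fun i => wsum (label_trans L s i) (fun s' => Vf s' - Vf s))
                 <= - lam L * Vf s).
    { unfold Vf at 3. rewrite <- sumL_scal. apply sumL_le. intros i Hi. apply label_drift; auto. }
    assert (D2 : wsum [(/ INR L * j, inject s)] (fun s' => Vf s' - Vf s) = 0).
    { unfold wsum. simpl. rewrite V_inject. ring. }
    assert (D3 : wsum match Defs.remove s with Some s' => [(/ INR L * j, s')] | None => [] end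
                   (fun s' => Vf s' - Vf s) <= 0).
    { destruct (Defs.remove s) as [s'|] eqn:E.
      - destruct (remove_le s s' HI E) as [HN [Hc _]].
        unfold wsum. simpl. pose proof eps_j_pos.
        assert (Vf s' <= Vf s) by (unfold Vf; rewrite HN; apply sumL_le; auto).
        nra.
      - unfold wsum. simpl. lra. }
    lra. }
  rewrite wsum_sub in D. unfold total_rate. lra.
Qed.

Lemma moves_le a a' : (a <= L)%nat -> In a' (moves L a) -> (a' <= L)%nat.
Proof.
  unfold moves. intros H Hin. apply in_app_or in Hin. destruct Hin as [Hin|Hin].
  - destruct (Nat.leb (S a) L) eqn:E; simpl in Hin; [|contradiction].
    destruct Hin as [<-|[]]. apply Nat.leb_le in E; lia.
  - destruct a; simpl in Hin; [contradiction|]. destruct Hin as [<-|[]]. lia.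
Qed.

Lemma trans_ok s : Inv s -> forall p, In p (coupled_trans L j s) -> 0 <= fst p /\ Inv (snd p).
Proof.
  intros [Hx Hy] p Hp. unfold coupled_trans in Hp.
  apply in_app_or in Hp. destruct Hp as [Hp|Hp].
  - apply in_flat_map in Hp. destruct Hp as [i [_ Hp]].
    unfold label_trans in Hp.
    destruct (sx s i) as [a|] eqn:Ea; destruct (sy s i) as [b|] eqn:Eb; try contradiction.
    + apply Hx in Ea. apply Hy in Eb. destruct (Nat.eqb a b).
      * apply in_map_iff in Hp. destruct Hp as [a' [<- Ha']]. simpl. split; [lra|].
        split; apply goodf_upd; auto; intros z Hz; inversion Hz; subst; first [apply (moves_le a); assumption | apply (moves_le b); assumption].
      * apply in_app_or in Hp. destruct Hp as [Hp|Hp]; apply in_map_iff in Hp; destruct Hp as [a' [<- Ha']];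
        simpl; (split; [lra|]); split; try apply goodf_upd; auto; intros z Hz; inversion Hz; subst;
        first [apply (moves_le a); assumption | apply (moves_le b); assumption].
    + apply Hy in Eb. apply in_map_iff in Hp. destruct Hp as [a' [<- Ha']]. simpl. split; [lra|].
      split; try apply goodf_upd; auto; intros z Hz; inversion Hz; subst; first [apply (moves_le a); assumption | apply (moves_le b); assumption].
  - simpl in Hp. destruct Hp as [<-|Hp].
    + simpl. split. apply eps_j_pos. split; apply goodf_upd; auto; intros z Hz; inversion Hz; lia.
    + destruct (Defs.remove s) as [s'|] eqn:E; [|contradiction].
      destruct Hp as [<-|[]]. simpl. split. apply eps_j_pos.
      destruct (remove_le s s' (conj Hx Hy) E) as [_ [_ H]]. auto.
Qed.
End States.

Lemma init_ok L n m x0 y0 :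
  (forall i, (1 <= i <= n)%nat -> (x0 i <= L)%nat) ->
  (forall i, (1 <= i <= n + m)%nat -> (y0 i <= L)%nat) ->
  Inv L (init_state n m x0 y0).
Proof.
  intros H1 H2. split; intros i a; unfold init_state; cbn [sx sy].
  - destruct (Nat.leb 1 i) eqn:F1; destruct (Nat.leb i n) eqn:F2; cbn [andb]; intros E; try discriminate.
    inversion E; subst. apply Nat.leb_le in F1; apply Nat.leb_le in F2; auto.
  - destruct (Nat.leb 1 i) eqn:F1; destruct (Nat.leb i (n + m)) eqn:F2; cbn [andb]; intros E; try discriminate.
    inversion E; subst. apply Nat.leb_le in F1; apply Nat.leb_le in F2; auto.
Qed.

Lemma V_init L (HL : (0 < L)%nat) n m x0 y0 : Vf L (init_state n m x0 y0) <= 2 * INR n.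
Proof.
  unfold Vf. simpl sN.
  apply Rle_trans with (sumL (seq 1 (n + m)) (fun l => if Nat.leb l n then 2 else 0)).
  - apply sumL_le. intros l Hl. unfold contrib, init_state. cbn [sx sy].
    destruct (Nat.leb l n) eqn:E2; [| rewrite Bool.andb_false_r; lra].
    destruct (Nat.leb 1 l && true)%bool; [|lra].
    destruct (Nat.leb 1 l && Nat.leb l (n + m))%bool; [apply (G_le2 L HL)|lra].
  - rewrite seq_app, sumL_app.
    rewrite (sumL_ext (seq 1 n) _ (fun _ => 2)).
    2:{ intros l Hl. apply in_seq in Hl. replace (Nat.leb l n) with true. auto. symmetry; apply Nat.leb_le; lia. }
    rewrite (sumL_ext (seq (1 + n) m) _ (fun _ => 0)).
    2:{ intros l Hl. apply in_seq in Hl. replace (Nat.leb l n) with false. auto. symmetry; apply Nat.leb_gt; lia. }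
    rewrite !sumL_const, !seq_length. lra.
Qed.

Lemma exp_le_mono x y : x <= y -> exp x <= exp y.
Proof. intros [H|H]. left; apply exp_increasing; auto. subst; lra. Qed.

Theorem theorem4p6 (j : R) (hj : 0 < j) :
  exists c b : R, 0 < c /\ 0 < b /\
  forall (L : nat), (0 < L)%nat ->
  forall (t : R), 0 <= t ->
  forall (n m : nat), (0 < n)%nat ->
  forall (x0 y0 : nat -> nat),
    (forall i, (1 <= i <= n)%nat -> (x0 i <= L)%nat) ->
    (forall i, (1 <= i <= n + m)%nat -> (y0 i <= L)%nat) ->
    Rbar_le (mjp_expect (coupled_trans L j) card_Dneq t (init_state n m x0 y0))
            (Finite (c * INR n * exp (- b * (/ INR L) ^ 2 * t))).
Proof.
  exists 2, (/ 4). split; [lra|]. split; [lra|].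
  intros L HL t Ht n m Hn x0 y0 Hx Hy.
  eapply Rbar_le_trans.
  - apply (dynkin cstate (coupled_trans L j) card_Dneq (Vf L) (Inv L) (lam L)).
    + apply (trans_ok L HL j hj).
    + apply (card_le L HL).
    + apply (V_nonneg L HL).
    + apply (drift L HL j hj).
    + apply init_ok; auto.
    + auto.
  - simpl.
    pose proof (V_init L HL n m x0 y0) as HV.
    pose proof (V_nonneg L HL (init_state n m x0 y0) (init_ok L n m x0 y0 Hx Hy)) as HV0.
    assert (HLr : 1 <= INR L) by (apply (le_INR 1); lia).
    assert (Hlam : / 4 * (/ INR L) ^ 2 <= lam L).
    { unfold lam, M. replace (/ 4 * (/ INR L) ^ 2) with (/ (4 * (INR L * INR L))) by (field; lra).
      apply Rinv_le_contravar. nra. nra. }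
    assert (exp (- lam L * t) <= exp (- / 4 * (/ INR L) ^ 2 * t)).
    { apply exp_le_mono. nra. }
    assert (0 < exp (- lam L * t)) by apply exp_pos.
    set (e1 := exp (- lam L * t)) in *. set (e2 := exp (- / 4 * (/ INR L) ^ 2 * t)) in *.
    set (V0 := Vf L (init_state n m x0 y0)) in *.
    apply Rle_trans with (e2 * V0). apply Rmult_le_compat_r; auto.
    assert (0 < e2) by (unfold e2; apply exp_pos).
    replace (exp (- / 4 * (/ INR L * (/ INR L * 1)) * t)) with e2 by (unfold e2; f_equal; ring). nra.
Qed.
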